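(* Let $K=\{x\in\mathbb{R}^m:Ax\succeq0\}$ with $A\in\mathcal{A}$, and assume $F$ is $K$-smooth with $\ell\in\mathrm{int}(K)$ and strongly $K$-convex with $\mu\in\mathrm{int}(K)$. Let the constants in the Barzilai-Borwein rule satisfy $0<\alpha_{\min}\le\min_{i\in[l]}\langle A_i,\mu\rangle$ and $\alpha_{\max}\ge\max_{i\in[l]}\langle A_i,\ell\rangle$, let $x^{-1}\ne x^0$, and let $\{x^k\}$ be generated by Algorithm 8 with $\gamma\in(0,1)$, assumed not to terminate ($d^k\neq0$ for all $k$). Then: (i) $A\mu\preceq\alpha^k\preceq A\ell$ for all $k$; (ii) $t_k\ge\min_{i\in[l]}\gamma\alpha_i^k/\langle A_i,\ell\rangle$; (iii) $\{x^k\}$ converges to an efficient solution $x^*$ of $\min_K F(x)$; (iv) $\|x^{k+1}-x^*\|\le\sqrt{1-\min_{i\in[l]}t_k\langle A_i,\mu\rangle/\alpha_i^k}\,\|x^k-x^*\|$ for all $k\ge0$.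
   Context: $K\subset\mathbb{R}^m$ is a pointed polyhedral cone with nonempty interior; $y\preceq_K y'$ iff $y'-y\in K$; on $\mathbb{R}^l$, $\preceq$ is componentwise. $\mathcal{A}:=\{A\in\mathbb{R}^{l\times m}:AK=\mathbb{R}^l_+\}$, $K=\{x:Ax\succeq0\}$; $A_i$ is the $i$-th row of $A$, $[l]=\{1,\dots,l\}$, $\Delta_l=\{\lambda\in\mathbb{R}^l_+:\sum_i\lambda_i=1\}$. $F:\mathbb{R}^n\to\mathbb{R}^m$ differentiable with Jacobian $JF$. Strongly $K$-convex with $\mu$: $JF(x)(y-x)+\tfrac12\|y-x\|^2\mu\preceq_K F(y)-F(x)$ $\forall x,y$; $K$-smooth with $\ell$: $F(y)-F(x)\preceq_K JF(x)(y-x)+\tfrac12\|y-x\|^2\ell$ $\forall x,y$. Efficient: no $x$ with $F(x)\preceq_K F(x^* )$, $F(x)\ne F(x^* )$. Barzilai-Borwein rule: with $s_{k-1}=x^k-x^{k-1}$ and $y_i^{k-1}$ the $i$-th row of $A(JF(x^k)-JF(x^{k-1}))$ (a vector in $\mathbb{R}^n$), $\alpha_i^k:=\max\{\alpha_{\min},\min\{\langle s_{k-1},y_i^{k-1}\rangle/\|s_{k-1}\|^2,\alpha_{\max}\}\}$ if $\langle s_{k-1},y_i^{k-1}\rangle>0$; $\alpha_i^k:=\max\{\alpha_{\min},\min\{\|y_i^{k-1}\|/\|s_{k-1}\|,\alpha_{\max}\}\}$ if $\langle s_{k-1},y_i^{k-1}\rangle<0$; $\alpha_i^k:=\alpha_{\min}$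 if it equals $0$. Algorithm 8 ($K$-Barzilai-Borwein descent method): given $x^0$, $x^{-1}$, for $k=0,1,\dots$: compute $\alpha^k$; with $\Lambda^k=\mathrm{diag}(1/\alpha_1^k,\dots,1/\alpha_l^k)$, $d^k:=\arg\min_{d}\max_{\lambda\in\Delta_l}\langle\lambda,\Lambda^kAJF(x^k)d\rangle+\tfrac12\|d\|^2$; if $d^k=0$ stop; otherwise $t_k:=\max\{\gamma^j:j\in\mathbb{N},\ A(F(x^k+\gamma^jd^k)-F(x^k))\preceq\gamma^j(AJF(x^k)d^k+\tfrac12\|d^k\|^2\alpha^k)\}$, $x^{k+1}:=x^k+t_kd^k$. *)

(* Defs.v *)
From HB Require Import structures.
From mathcomp Require Import all_boot all_order all_algebra.
From mathcomp Require Import all_classical all_reals all_analysis.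
Set Implicit Arguments. Unset Strict Implicit. Unset Printing Implicit Defensive.
Import Order.TTheory GRing.Theory Num.Theory.
Import numFieldNormedType.Exports.
Local Open Scope classical_set_scope.
Local Open Scope ring_scope.

Section Defs.
Variable R : realType.

Definition dotv k (u v : 'rV[R]_k) : R := \sum_(i < k) u 0 i * v 0 i.
Definition enorm k (u : 'rV[R]_k) : R := Num.sqrt (dotv u u).

Definition minI l (f : 'I_l.+1 -> R) : R := \big[Num.min/f ord0]_(i < l.+1) f i.
Definition maxI l (f : 'I_l.+1 -> R) : R := \big[Num.max/f ord0]_(i < l.+1) f i.

Definition Amap l m (A : 'M[R]_(l, m)) (y : 'rV[R]_m) : 'rV[R]_l := y *m A^T.

Definition coneK l m (A : 'M[R]_(l, m)) : set 'rV[R]_m :=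
  [set x | forall i, 0 <= Amap A x 0 i].

Definition leK l m (A : 'M[R]_(l, m)) (y y' : 'rV[R]_m) : Prop := coneK A (y' - y).

Definition in_calA l m (A : 'M[R]_(l, m)) : Prop :=
  Amap A @` coneK A = [set z : 'rV[R]_l | forall i, 0 <= z 0 i].

Definition pointed_cone m (K : set 'rV[R]_m) : Prop :=
  forall x, K x -> K (- x) -> x = 0.

(* Jacobian matrix of F at x, acting on row vectors: JF(x) d = d *m jac F x *)
Definition jac n m (F : 'rV[R]_n -> 'rV[R]_m) (x : 'rV[R]_n) : 'M[R]_(n, m) :=
  lin1_mx ('d F x).

Definition strongly_Kconvex n l m (A : 'M[R]_(l, m)) (F : 'rV[R]_n -> 'rV[R]_m)
  (mu : 'rV[R]_m) : Prop :=
  forall x y, leK A ('d F x (y - x) + (enorm (y - x) ^+ 2 / 2) *: mu) (F y - F x).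

Definition K_smooth n l m (A : 'M[R]_(l, m)) (F : 'rV[R]_n -> 'rV[R]_m)
  (ell : 'rV[R]_m) : Prop :=
  forall x y, leK A (F y - F x) ('d F x (y - x) + (enorm (y - x) ^+ 2 / 2) *: ell).

Definition efficient n l m (A : 'M[R]_(l, m)) (F : 'rV[R]_n -> 'rV[R]_m)
  (xs : 'rV[R]_n) : Prop :=
  ~ (exists x, leK A (F x) (F xs) /\ F x <> F xs).

Definition simplex l : set 'rV[R]_l :=
  [set lam | (forall i, 0 <= lam 0 i) /\ \sum_(i < l) lam 0 i = 1].

Definition subobj n l m (A : 'M[R]_(l, m)) (F : 'rV[R]_n -> 'rV[R]_m)
  (x : 'rV[R]_n) (alpha : 'I_l -> R) (d : 'rV[R]_n) : R :=
  sup [set dotv lam (\row_i (Amap A ('d F x d) 0 i / alpha i)) | lam in @simplex l]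
  + enorm d ^+ 2 / 2.

Definition bb n (amin amax : R) (s y : 'rV[R]_n) : R :=
  let sy := dotv s y in
  if 0 < sy then Num.max amin (Num.min (sy / enorm s ^+ 2) amax)
  else if sy < 0 then Num.max amin (Num.min (enorm y / enorm s) amax)
  else amin.

Definition yBB n l m (A : 'M[R]_(l, m)) (F : 'rV[R]_n -> 'rV[R]_m)
  (xprev xk : 'rV[R]_n) (i : 'I_l) : 'rV[R]_n :=
  (col i (jac F xk *m A^T - jac F xprev *m A^T))^T.

Definition alphaBB n l m (amin amax : R) (A : 'M[R]_(l, m))
  (F : 'rV[R]_n -> 'rV[R]_m) (xprev xk : 'rV[R]_n) (i : 'I_l) : R :=
  bb amin amax (xk - xprev) (yBB A F xprev xk i).

Definition ls_cond n l m (A : 'M[R]_(l, m)) (F : 'rV[R]_n -> 'rV[R]_m)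
  (x d : 'rV[R]_n) (alpha : 'I_l -> R) (c : R) : Prop :=
  forall i, Amap A (F (x + c *: d) - F x) 0 i
            <= c * (Amap A ('d F x d) 0 i + enorm d ^+ 2 / 2 * alpha i).

Definition prevx n (xm1 : 'rV[R]_n) (x : nat -> 'rV[R]_n) (k : nat) : 'rV[R]_n :=
  if k is k'.+1 then x k' else xm1.

Definition KBB_seq n l m (A : 'M[R]_(l, m)) (F : 'rV[R]_n -> 'rV[R]_m)
  (amin amax gamma : R) (xm1 : 'rV[R]_n) (x : nat -> 'rV[R]_n)
  (alpha : nat -> 'I_l -> R) (d : nat -> 'rV[R]_n) (t : nat -> R) : Prop :=
  (forall k i, alpha k i = alphaBB amin amax A F (prevx xm1 x k) (x k) i) /\
  (forall k d', subobj A F (x k) (alpha k) (d k) <= subobj A F (x k) (alpha k) d') /\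
  (forall k, d k <> 0) /\
  (forall k, exists j : nat,
      t k = gamma ^+ j /\ ls_cond A F (x k) (d k) (alpha k) (gamma ^+ j) /\
      forall j' : nat, ls_cond A F (x k) (d k) (alpha k) (gamma ^+ j') ->
                       gamma ^+ j' <= gamma ^+ j) /\
  (forall k, x k.+1 = x k + t k *: d k).

End Defs.

(* Main.v *)
Require Import Defs.
From HB Require Import structures.
From mathcomp Require Import all_boot all_order all_algebra.
From mathcomp Require Import all_classical all_reals all_analysis.
From mathcomp Require Import lra ring.
Import Order.TTheory GRing.Theory Num.Theory.
Import numFieldNormedType.Exports.
Local Open Scope classical_set_scope.
Local Open Scope ring_scope.
Section Aux.

Context {R : realType}.
Implicit Types (a b c e : R).

Lemma dotvC {k} (u v : 'rV[R]_k) : dotv u v = dotv v u.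
Proof. by rewrite /dotv; apply: eq_bigr => i _; rewrite mulrC. Qed.
Lemma dotvDl {k} (u v w : 'rV[R]_k) : dotv (u + v) w = dotv u w + dotv v w.
Proof. by rewrite /dotv -big_split; apply: eq_bigr => i _; rewrite mxE mulrDl. Qed.
Lemma dotvZl {k} a (u w : 'rV[R]_k) : dotv (a *: u) w = a * dotv u w.
Proof. by rewrite /dotv mulr_sumr; apply: eq_bigr => i _; rewrite mxE mulrA. Qed.
Lemma dotvNl {k} (u w : 'rV[R]_k) : dotv (- u) w = - dotv u w.
Proof. by rewrite -scaleN1r dotvZl mulN1r. Qed.
Lemma dotvBl {k} (u v w : 'rV[R]_k) : dotv (u - v) w = dotv u w - dotv v w.
Proof. by rewrite dotvDl dotvNl. Qed.
Lemma dotvDr {k} (u v w : 'rV[R]_k) : dotv w (u + v) = dotv w u + dotv w v.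
Proof. by rewrite !(dotvC w) dotvDl. Qed.
Lemma dotvZr {k} a (u w : 'rV[R]_k) : dotv w (a *: u) = a * dotv w u.
Proof. by rewrite !(dotvC w) dotvZl. Qed.
Lemma dotvNr {k} (u w : 'rV[R]_k) : dotv w (- u) = - dotv w u.
Proof. by rewrite !(dotvC w) dotvNl. Qed.
Lemma dotvBr {k} (u v w : 'rV[R]_k) : dotv w (u - v) = dotv w u - dotv w v.
Proof. by rewrite !(dotvC w) dotvBl. Qed.
Lemma dotv_ge0 {k} (u : 'rV[R]_k) : 0 <= dotv u u.
Proof. by apply: sumr_ge0 => i _; rewrite -expr2 sqr_ge0. Qed.
Lemma dotv_eq0 {k} (u : 'rV[R]_k) : dotv u u = 0 -> u = 0.
Proof.
move=> h; apply/rowP => j; rewrite mxE.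
have hp : forall i : 'I_k, true -> 0 <= u 0 i * u 0 i by move=> i _; rewrite -expr2 sqr_ge0.
have := psumr_eq0P hp h (i:=j) isT.
by move/eqP; rewrite mulf_eq0 orbb => /eqP.
Qed.
Lemma enorm_ge0 {k} (u : 'rV[R]_k) : 0 <= enorm u.
Proof. exact: sqrtr_ge0. Qed.
Lemma enorm2 {k} (u : 'rV[R]_k) : enorm u ^+ 2 = dotv u u.
Proof. by rewrite /enorm sqr_sqrtr // dotv_ge0. Qed.
Lemma enormN {k} (u : 'rV[R]_k) : enorm (- u) = enorm u.
Proof. by rewrite /enorm dotvNl dotvNr opprK. Qed.
Lemma enormB {k} (u v : 'rV[R]_k) : enorm (u - v) = enorm (v - u).
Proof. by rewrite -enormN opprB. Qed.
Lemma dotv_gt0 {k} (u : 'rV[R]_k) : u != 0 -> 0 < dotv u u.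
Proof.
move=> u0; rewrite lt_def dotv_ge0 andbT; apply/eqP => h.
by move: u0; rewrite (dotv_eq0 _ h) eqxx.
Qed.

Lemma CS {k} (u v : 'rV[R]_k) : dotv u v <= enorm u * enorm v.
Proof.
have [u0|u0] := eqVneq u 0.
  by rewrite u0 /dotv big1 ?mulr_ge0 ?enorm_ge0 // => i _; rewrite mxE mul0r.
set a := enorm u; set b := enorm v.
have a0 : 0 < a by rewrite /a /enorm sqrtr_gt0 dotv_gt0.
have b0 : 0 <= b by exact: enorm_ge0.
have := dotv_ge0 (b *: u - a *: v).
rewrite !(dotvBl, dotvBr, dotvZl, dotvZr) -!enorm2 -/a -/b (dotvC v u) => h.
have [b00|b00] := eqVneq b 0.
  have hv : v = 0 by apply: dotv_eq0; rewrite -enorm2 -/b b00 expr0n.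
  by rewrite hv b00 mulr0 /dotv big1 // => i _; rewrite mxE mulr0.
have bp : 0 < b by rewrite lt_def b00 b0.
have h2 : 0 < 2 * a * b by rewrite !mulr_gt0.
have : 0 <= 2 * a * b * (a * b - dotv u v) by nra.
by rewrite pmulr_rge0 // subr_ge0.
Qed.

Lemma enormD {k} (u v : 'rV[R]_k) : enorm (u + v) <= enorm u + enorm v.
Proof.
rewrite -(ler_pXn2r (n:=2)) ?nnegrE ?addr_ge0 ?enorm_ge0 //.
rewrite enorm2 dotvDl !dotvDr (dotvC v u) -!enorm2 sqrrD.
have := CS u v; lra.
Qed.

Lemma normr_le_enorm {k} (u : 'rV[R]_k) : `|u| <= enorm u.
Proof.
rewrite [leLHS]/Num.Def.normr /= mx_normrE; apply: bigmax_le; first exact: enorm_ge0.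
move=> [i j] _ /=; rewrite (ord1 i) -sqrtr_sqr /enorm ler_sqrt ?dotv_ge0 //.
rewrite /dotv (bigD1 j) //= expr2 lerDl; apply: sumr_ge0 => ? _.
by rewrite -expr2 sqr_ge0.
Qed.

Lemma le0_eps (X C : R) : 0 <= C -> (forall e, 0 < e -> e <= 1 -> X <= e * C) -> X <= 0.
Proof.
move=> C0 H; rewrite leNgt; apply/negP => X0.
have CX0 : 0 < C + X by lra.
set e := X / (C + X).
have he : e * (C + X) = X by rewrite /e mulfVK // gt_eqF.
have e0 : 0 < e by rewrite /e divr_gt0.
have e1 : e <= 1 by rewrite /e ler_pdivrMr // mul1r; lra.
have := H e e0 e1; nra.
Qed.

Lemma minI_le {l} (f : 'I_l.+1 -> R) i : minI f <= f i.
Proof.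
rewrite /minI; have : i \in index_enum 'I_l.+1 by rewrite mem_index_enum.
elim: (index_enum _) => // a r IH; rewrite inE big_cons /=.
by case/orP => [/eqP->|/IH h]; rewrite ge_min ?lexx // h orbT.
Qed.
Lemma minI_ge {l} (f : 'I_l.+1 -> R) c : (forall i, c <= f i) -> c <= minI f.
Proof. by move=> h; rewrite /minI; elim/big_ind: _ => // a b ha hb; rewrite le_min ha hb. Qed.
Lemma minI_ex {l} (f : 'I_l.+1 -> R) : exists i, minI f = f i.
Proof.
rewrite /minI; elim/big_ind: _ => [|a b [i ->] [j ->]|i _]; try by eexists.
case: (leP (f i) (f j)) => h; [exists i | exists j]; apply/le_anti; rewrite /=;
  by rewrite ?ge_min ?le_min ?lexx ?h ?(ltW h) ?orbT.
Qed.
Lemma maxI_ge {l} (f : 'I_l.+1 -> R) i : f i <= maxI f.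
Proof.
rewrite /maxI; have : i \in index_enum 'I_l.+1 by rewrite mem_index_enum.
elim: (index_enum _) => // a r IH; rewrite inE big_cons /=.
by case/orP => [/eqP->|/IH h]; rewrite le_max ?lexx // h orbT.
Qed.
Lemma maxI_ex {l} (f : 'I_l.+1 -> R) : exists i, maxI f = f i.
Proof.
rewrite /maxI; elim/big_ind: _ => [|a b [i ->] [j ->]|i _]; try by eexists.
case: (leP (f i) (f j)) => h; [exists j | exists i]; apply/le_anti; rewrite /=;
  by rewrite ?ge_max ?le_max ?lexx ?h ?(ltW h) ?orbT.
Qed.

End Aux.
Section Aux2.

Context {R : realType}.

Lemma sup_simplex {l} (c : 'rV[R]_l.+1) :
  sup [set dotv lam c | lam in @simplex R l.+1] = maxI (fun i => c 0 i).
Proof.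
set S := [set _ | _ in _].
have ub : ubound S (maxI (fun i => c 0 i)).
  move=> _ [lam [lam0 lam1] <-].
  rewrite /dotv; apply: (@le_trans _ _ (\sum_(i < l.+1) lam 0 i * maxI (fun i => c 0 i))).
    by apply: ler_sum => i _; apply: ler_wpM2l => //; exact: maxI_ge.
  by rewrite -mulr_suml lam1 mul1r.
have [i hi] := maxI_ex (fun i => c 0 i).
pose e : 'rV[R]_l.+1 := \row_j (j == i)%:R.
have es : simplex e.
  split; first by move=> j; rewrite mxE ler0n.
  rewrite (bigD1 i) //= mxE eqxx big1 ?addr0 // => j /negbTE ji; by rewrite mxE ji.
have Se : S (dotv e c) by exists e.
have ec : dotv e c = c 0 i.
  rewrite /dotv (bigD1 i) //= mxE eqxx mul1r big1 ?addr0 // => j /negbTE ji.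
  by rewrite mxE ji mul0r.
apply/le_anti/andP; split; first by apply: ge_sup => //; exists (dotv e c).
rewrite hi -ec; apply: sup_upper_bound => //; split; first by exists (dotv e c).
by exists (maxI (fun i => c 0 i)).
Qed.

Lemma subprob {n l} (h : 'I_l.+1 -> 'rV[R]_n -> R) (d : 'rV[R]_n) :
  (forall i u v, h i (u + v) = h i u + h i v) ->
  (forall i a u, h i (a *: u) = a * h i u) ->
  (forall v, maxI (fun i => h i d) + dotv d d / 2 <= maxI (fun i => h i v) + dotv v v / 2) ->
  maxI (fun i => h i d) = - dotv d d /\
  (forall v tt, 0 <= tt -> exists i, tt * (h i d + dotv d d) <= h i v + dotv d v).
Proof.
move=> hD hZ opt.
set M := maxI (fun i => h i d); set D := dotv d d.
have D0 : 0 <= D by exact: dotv_ge0.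
have key : forall s, 0 <= s -> M + D / 2 <= s * M + s * s * D / 2.
  move=> s s0; apply: (le_trans (opt (s *: d))).
  have [j ->] := maxI_ex (fun i => h i (s *: d)).
  rewrite hZ dotvZl dotvZr -/D mulrA lerD2r; apply: ler_wpM2l => //; exact: maxI_ge.
have MD : M = - D.
  apply/eqP; rewrite -subr_eq0 opprK; apply/eqP/le_anti/andP; split.
    apply: (@le0_eps _ _ (D / 2)); first by rewrite divr_ge0.
    move=> e e0 e1; have h1 : M + D / 2 <= (1 - e) * M + (1 - e) * (1 - e) * D / 2.
      by apply: key; lra.
    have : 0 <= e * (e * (D / 2) - (M + D)) by nra.
    by rewrite pmulr_rge0 // subr_ge0.
  rewrite -oppr_le0; apply: (@le0_eps _ _ (D / 2)); first by rewrite divr_ge0.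
  move=> e e0 e1; have h1 : M + D / 2 <= (1 + e) * M + (1 + e) * (1 + e) * D / 2.
    by apply: key; lra.
  have : 0 <= e * (e * (D / 2) + (M + D)) by nra.
  by rewrite pmulr_rge0 // => hh; lra.
split => // v tt tt0.
set P := dotv d v; set V := dotv v v.
pose E i := h i v + P - tt * (h i d + D).
set C := (D - 2 * P + V) / 2.
suff : 0 <= maxI E.
  have [j ->] := maxI_ex E; rewrite /E => hj; exists j; lra.
rewrite -oppr_le0; apply: (@le0_eps _ _ `|C|) => // s s0 s1.
pose w := (1 - s) *: d + s *: v.
have hw := opt w.
have [i hi] := maxI_ex (fun i => h i w).
rewrite hi /w hD !hZ !(dotvDl, dotvDr, dotvZl, dotvZr) -/D -/P -/V (dotvC v d) -/P in hw.
have ai : h i d <= M by exact: maxI_ge.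
have hint : (h i d + D) * (1 - s + s * tt) <= 0.
  apply: mulr_le0_ge0; first by lra.
  have : 0 <= s * tt by rewrite mulr_ge0 // ltW.
  lra.
have : s * (E i) >= - (s * s) * C.
  rewrite /E /C; rewrite -/M MD in hw; lra.
rewrite mulNr -mulrA -mulrN ler_pM2l // => hE.
have := maxI_ge E i.
have : C <= `|C| by exact: ler_norm.
nra.
Qed.

End Aux2.
Section Model.
Context {R : realType} {n m l : nat} (A : 'M[R]_(l.+1, m)) (F : 'rV[R]_n -> 'rV[R]_m).

Lemma AmapD (u v : 'rV[R]_m) i : Amap A (u + v) 0 i = Amap A u 0 i + Amap A v 0 i.
Proof. by rewrite /Amap mulmxDl mxE. Qed.
Lemma AmapZ a (u : 'rV[R]_m) i : Amap A (a *: u) 0 i = a * Amap A u 0 i.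
Proof. by rewrite /Amap -scalemxAl mxE. Qed.
Lemma AmapN (u : 'rV[R]_m) i : Amap A (- u) 0 i = - Amap A u 0 i.
Proof. by rewrite /Amap mulNmx mxE. Qed.
Lemma AmapB (u v : 'rV[R]_m) i : Amap A (u - v) 0 i = Amap A u 0 i - Amap A v 0 i.
Proof. by rewrite AmapD AmapN. Qed.

Lemma leKP (u v : 'rV[R]_m) : leK A u v -> forall i, Amap A u 0 i <= Amap A v 0 i.
Proof. by move=> h i; have := h i; rewrite AmapB subr_ge0. Qed.

Lemma Amap_lip (z : 'rV[R]_m) i : `|Amap A z 0 i| <= (\sum_j `|A i j|) * `|z|.
Proof.
rewrite /Amap mxE mulr_suml; apply: le_trans (ler_norm_sum _ _ _) _.
apply: ler_sum => j _; rewrite mxE normrM mulrC; apply: ler_wpM2l => //.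
rewrite [leRHS]/Num.Def.normr /= mx_normrE.
exact: (le_bigmax 0 (fun ij : 'I_1 * 'I_m => `|z ij.1 ij.2|) (ord0, j)).
Qed.

Lemma dlinD x (u v : 'rV[R]_n) i :
  Amap A ('d F x (u + v)) 0 i = Amap A ('d F x u) 0 i + Amap A ('d F x v) 0 i.
Proof. by rewrite linearD AmapD. Qed.
Lemma dlinZ x a (u : 'rV[R]_n) i :
  Amap A ('d F x (a *: u)) 0 i = a * Amap A ('d F x u) 0 i.
Proof. by rewrite linearZ AmapZ. Qed.
Lemma dlinN x (u : 'rV[R]_n) i :
  Amap A ('d F x (- u)) 0 i = - Amap A ('d F x u) 0 i.
Proof. by rewrite linearN AmapN. Qed.

Lemma int_pos (z : 'rV[R]_m) : in_calA A -> interior (coneK A) z ->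
  forall i, 0 < Amap A z 0 i.
Proof.
move=> hA hz i.
pose e : 'rV[R]_l.+1 := \row_j (j == i)%:R.
have : (Amap A @` coneK A) e by rewrite hA => j; rewrite mxE ler0n.
case=> w Kw Aw.
have [eps eps0 heps] := (nbhs_ballP _ _).1 hz.
pose dl := eps / (`|w| + 1).
have dl0 : 0 < dl by rewrite divr_gt0 // ltr_wpDl.
have : coneK A (z - dl *: w).
  apply: heps; rewrite -ball_normE /= opprB addrC subrK normrZ gtr0_norm //.
  have w0 : 0 <= `|w| by [].
  rewrite /dl mulrAC ltr_pdivrMr ?ltr_wpDl // ltr_pM2l //; lra.
have e1 : e 0 i = 1 by rewrite /e mxE eqxx.
move=> /(_ i); rewrite AmapB AmapZ Aw e1 mulr1 subr_ge0 => h.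
by apply: lt_le_trans h.
Qed.

Lemma subobjE x (al : 'I_l.+1 -> R) (v : 'rV[R]_n) :
  subobj A F x al v = maxI (fun i => Amap A ('d F x v) 0 i / al i) + dotv v v / 2.
Proof.
rewrite /subobj sup_simplex enorm2; congr (maxI _ + _).
by apply/funext => i; rewrite mxE.
Qed.

End Model.
Section Model3.
Context {R : realType} {n m l : nat} (A : 'M[R]_(l.+1, m)) (F : 'rV[R]_n -> 'rV[R]_m).
Lemma jacE xx (s : 'rV[R]_n) : s *m jac F xx = 'd F xx s.
Proof. by rewrite /jac mul_rV_lin1. Qed.
Lemma dot_col (s : 'rV[R]_n) (M : 'M[R]_(n, l.+1)) i :
  dotv s ((col i M)^T) = (s *m M) 0 i.
Proof. by rewrite /dotv mxE; apply: eq_bigr => j _; rewrite !mxE. Qed.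
Lemma Amap_jac xx (s : 'rV[R]_n) i : Amap A ('d F xx s) 0 i = (s *m (jac F xx *m A^T)) 0 i.
Proof. rewrite mulmxA. rewrite jacE. by []. Qed.
End Model3.
Section M4.
Context {R : realType} {n m l : nat} (A : 'M[R]_(l.+1, m)) (F : 'rV[R]_n -> 'rV[R]_m).
Lemma subE_mx p q (U V : 'M[R]_(p, q)) a b : (U - V) a b = U a b - V a b.
Proof. by rewrite !mxE. Qed.
Lemma dot_yBB xp xk (s : 'rV[R]_n) i :
  dotv s (yBB A F xp xk i) = Amap A ('d F xk s) 0 i - Amap A ('d F xp s) 0 i.
Proof.
rewrite /yBB dot_col.
have h1 := Amap_jac A F xk s i. have h2 := Amap_jac A F xp s i.
transitivity ((s *m (jac F xk *m A^T)) 0 i - (s *m (jac F xp *m A^T)) 0 i).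
  by rewrite mulmxBr subE_mx.
exact: (f_equal2 (fun a b => a - b) (esym h1) (esym h2)).
Qed.
End M4.
Section Model5.
Context {R : realType} {n m l : nat} (A : 'M[R]_(l.+1, m)) (F : 'rV[R]_n -> 'rV[R]_m).

Lemma conv_i mu x y i : strongly_Kconvex A F mu ->
  Amap A ('d F x (y - x)) 0 i + enorm (y - x) ^+ 2 / 2 * Amap A mu 0 i
  <= Amap A (F y) 0 i - Amap A (F x) 0 i.
Proof.
move=> h; have := leKP A _ _ (h x y) i.
by rewrite (AmapD A ('d F x (y - x))) (AmapZ A _ mu) (AmapB A (F y)).
Qed.

Lemma smooth_i ell x y i : K_smooth A F ell ->
  Amap A (F y) 0 i - Amap A (F x) 0 i
  <= Amap A ('d F x (y - x)) 0 i + enorm (y - x) ^+ 2 / 2 * Amap A ell 0 i.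
Proof.
move=> h; have := leKP A _ _ (h x y) i.
by rewrite (AmapD A ('d F x (y - x))) (AmapZ A _ ell) (AmapB A (F y)).
Qed.

Lemma ls_i x dd (al : 'I_l.+1 -> R) c : ls_cond A F x dd al c -> forall i,
  Amap A (F (x + c *: dd)) 0 i - Amap A (F x) 0 i
  <= c * (Amap A ('d F x dd) 0 i + enorm dd ^+ 2 / 2 * al i).
Proof. by move=> h i; have := h i; rewrite (AmapB A (F (x + c *: dd))). Qed.

End Model5.

Lemma sqrt_le {R : realType} (a b c : R) : 0 <= a -> 0 <= b -> 0 <= c ->
  a ^+ 2 <= c * b ^+ 2 -> a <= Num.sqrt c * b.
Proof.
move=> a0 b0 c0 h.
rewrite -(ger0_norm a0) -sqrtr_sqr -(ger0_norm b0) -sqrtr_sqr -sqrtrM //.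
by rewrite ler_sqrt // mulr_ge0 // sqr_ge0.
Qed.

Lemma pow_small {R : realType} (q B eps : R) : 0 < q < 1 -> 0 <= B -> 0 < eps ->
  exists N, forall k, (N <= k)%N -> q ^+ k * B < eps.
Proof.
move=> /andP[q0 q1] B0 e0.
have hq : `|q| < 1 by rewrite gtr0_norm.
have c0 : 0 < eps / (B + 1) by rewrite divr_gt0 // ltr_wpDl.
move: (cvg_expr hq) => /cvgrPdist_lt /(_ _ c0) [N _ HN].
exists N => k /HN; rewrite /= sub0r normrN gtr0_norm ?exprn_gt0 // => h.
have : q ^+ k * B <= eps / (B + 1) * B by rewrite ler_wpM2r // ltW.
move/le_lt_trans; apply.
rewrite mulrAC ltr_pdivrMr ?ltr_wpDl // ltr_pM2l //; lra.
Qed.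

Lemma div_anti {R : realType} (x b c : R) : 0 <= x -> 0 < b -> b <= c -> x / c <= x / b.
Proof.
move=> x0 b0 bc; have c0 : 0 < c by exact: lt_le_trans bc.
by rewrite ler_pdivrMr // mulrAC ler_pdivlMr // ler_wpM2l.
Qed.
Section Arith.
Context {R : realType}.

Lemma bb_bounds {n} amin amax (s y : 'rV[R]_n) mui elli :
  0 < mui -> amin <= mui -> elli <= amax -> s != 0 ->
  enorm s ^+ 2 * mui <= dotv s y -> dotv s y <= enorm s ^+ 2 * elli ->
  mui <= bb amin amax s y <= elli.
Proof.
move=> mu0 h1 h2 s0 hl hu.
have E0 : 0 < enorm s ^+ 2 by rewrite enorm2 dotv_gt0.
have sy0 : 0 < dotv s y by apply: lt_le_trans hl; rewrite mulr_gt0.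
have q1 : mui <= dotv s y / enorm s ^+ 2 by rewrite ler_pdivlMr // mulrC.
have q2 : dotv s y / enorm s ^+ 2 <= elli by rewrite ler_pdivrMr // mulrC.
rewrite /bb /= sy0; apply/andP; split.
  rewrite le_max; apply/orP; right; rewrite le_min q1 /=; lra.
rewrite ge_max; apply/andP; split; first lra.
by rewrite ge_min q2.
Qed.

Lemma step_arith (t al mu D P V g a fy fx fx' : R) : 0 < t -> 0 < al ->
  g + V / 2 * mu <= fy - fx -> fx' - fx <= t * (a + D / 2 * al) ->
  t * (a / al + D) <= g / al + P -> fy <= fx' ->
  t * t * D - 2 * t * P + V <= (1 - t * mu / al) * V.
Proof.
move=> t0 al0 P1 P2 P3 P4.
set ia := al^-1.
have hia : al * ia = 1 by rewrite /ia mulfV ?gt_eqF.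
have ia0 : 0 < ia by rewrite /ia invr_gt0.
have K0 : g + V / 2 * mu <= t * (a + D / 2 * al) by lra.
have K1 := ler_wpM2r (ltW ia0) K0.
have e1 : (g + V / 2 * mu) * ia = g * ia + V / 2 * mu * ia by ring.
have e2 : t * (a + D / 2 * al) * ia = t * (a * ia) + t * D / 2 * (al * ia) by ring.
rewrite e1 e2 hia mulr1 in K1.
have h1 := ler_wpM2l (ltW (mulr_gt0 (ltr0Sn _ 1) t0)) K1.
have h2 := ler_wpM2l (ltW (mulr_gt0 (ltr0Sn _ 1) t0)) P3.
rewrite /ia in h1 h2 *.
have -> : t * mu / al = t * mu * ia by [].
rewrite /ia; nra.
Qed.

Lemma exists_pow_le (g c : R) : 0 < g < 1 -> 0 < c -> exists j, g ^+ j <= c.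
Proof.
move=> /andP[g0 g1] c0.
have hg : `|g| < 1 by rewrite gtr0_norm.
move: (cvg_expr hg) => /cvgrPdist_lt /(_ c c0) [N _ HN].
exists N; have := HN N (leqnn N); rewrite /= sub0r normrN gtr0_norm ?exprn_gt0 //.
exact: ltW.
Qed.

Lemma step_lb (g c0 t : R) (P : R -> Prop) : 0 < g < 1 -> 0 < c0 -> c0 <= 1 ->
  (forall c, 0 < c -> c <= c0 -> P c) ->
  (forall j : nat, P (g ^+ j) -> g ^+ j <= t) -> g * c0 <= t.
Proof.
move=> hg c00 c01 hP hmax; have /andP[g0 g1] := hg.
have ex : exists j, g ^+ j <= c0 by exact: exists_pow_le.
case: (ex_minnP ex) => j hj hmin.
have Pj : P (g ^+ j) by apply: hP => //; rewrite exprn_gt0.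
apply: le_trans (hmax _ Pj).
case: j hj hmin Pj => [|j] hj hmin _.
  rewrite expr0; have : g * c0 <= 1 * 1 by apply: ler_pM; lra.
  by rewrite mulr1.
have : ~~ (g ^+ j <= c0) by apply/negP => hj'; have := hmin j hj'; rewrite ltnn.
rewrite -ltNge => hlt; rewrite exprS ler_pM2l //; exact: ltW.
Qed.

End Arith.
Section Lin.
Context {R : realType}.
Lemma lin_lo {a b D mu fk fp : R} : b + D / 2 * mu <= fk - fp -> - a + D / 2 * mu <= fp - fk ->
  D * mu <= a - b.
Proof. move=> h1 h2; lra. Qed.
Lemma lin_hi {a b D ell fk fp : R} : fk - fp <= b + D / 2 * ell -> fp - fk <= - a + D / 2 * ell ->
  a - b <= D * ell.
Proof. move=> h1 h2; lra. Qed.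
End Lin.
Section Lin2.
Context {R : realType}.
Lemma mono_arith {tt al a D df : R} : 0 < tt -> 0 < al -> 0 <= D -> a / al <= - D ->
  df <= tt * (a + D / 2 * al) -> df <= 0.
Proof.
move=> t0 al0 D0; rewrite ler_pdivrMr // => h1 h2.
have : tt * (a + D / 2 * al) <= 0 by rewrite pmulr_rle0 //; nra.
lra.
Qed.
Lemma fin_arith {tt D P V r c : R} : tt * tt * D - 2 * tt * P + V <= (1 - c) * V -> r <= c -> 0 <= V ->
  tt * (tt * D) - tt * P - (tt * P - V) <= (1 - r) * V.
Proof. move=> h1 h2 h3; nra. Qed.
End Lin2.
Section Lin3.
Context {R : realType}.
Lemma ls_arith {c a D ell al df : R} : 0 < c -> 0 < ell -> 0 <= D -> c <= al / ell ->
  df <= c * a + c * (c * D) / 2 * ell -> df <= c * (a + D / 2 * al).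
Proof.
move=> c0 e0 D0; rewrite ler_pdivlMr // => h1 h2.
have : c * (c * D) / 2 * ell <= c * (D / 2 * al).
  have -> : c * (c * D) / 2 * ell = c * (D / 2 * (c * ell)) by ring.
  apply: ler_wpM2l; first exact: ltW.
  by apply: ler_wpM2l => //; rewrite divr_ge0.
lra.
Qed.
End Lin3.
Section Lin4.
Context {R : realType}.
Lemma dot_expand {k} (a : R) (u v : 'rV[R]_k) :
  dotv (a *: u - v) (a *: u - v) = a * a * dotv u u - 2 * a * dotv u v + dotv v v.
Proof. rewrite dotvBl !dotvBr !dotvZl !dotvZr (dotvC v u); ring. Qed.
Lemma fin2 {X V r c : R} : X <= (1 - c) * V -> r <= c -> 0 <= V -> X <= (1 - r) * V.
Proof. move=> h1 h2 h3; nra. Qed.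
End Lin4.
Theorem lemma5p3 (R : realType) (n m l : nat) (A : 'M[R]_(l.+1, m))
  (F : 'rV[R]_n -> 'rV[R]_m) (ell mu : 'rV[R]_m)
  (amin amax gamma : R) (xm1 : 'rV[R]_n) (x : nat -> 'rV[R]_n)
  (alpha : nat -> 'I_l.+1 -> R) (d : nat -> 'rV[R]_n) (t : nat -> R) :
  in_calA A ->
  pointed_cone (coneK A) ->
  interior (coneK A) !=set0 ->
  (forall z, differentiable F z) ->
  K_smooth A F ell -> interior (coneK A) ell ->
  strongly_Kconvex A F mu -> interior (coneK A) mu ->
  0 < amin -> amin <= minI (fun i => Amap A mu 0 i) ->
  maxI (fun i => Amap A ell 0 i) <= amax ->
  xm1 != x 0 ->
  0 < gamma < 1 ->
  KBB_seq A F amin amax gamma xm1 x alpha d t ->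
  (forall k i, Amap A mu 0 i <= alpha k i <= Amap A ell 0 i) /\
  (forall k, minI (fun i => gamma * alpha k i / Amap A ell 0 i) <= t k) /\
  (exists xs : 'rV[R]_n,
      efficient A F xs /\
      x @ \oo --> xs /\
      (forall k, enorm (x k.+1 - xs)
                 <= Num.sqrt (1 - minI (fun i => t k * Amap A mu 0 i / alpha k i))
                    * enorm (x k - xs))).
Proof.
move=> hA _ _ hdiff hsm hell hcv hmu amin0 hamin hamax hxm1 hg [halpha [hopt [hd0 [hls hx]]]].
have /andP[g0 g1] := hg.
have mupos := int_pos A mu hA hmu.
have ellpos := int_pos A ell hA hell.
have ht : forall k, 0 < t k /\ t k <= 1 /\ ls_cond A F (x k) (d k) (alpha k) (t k).
  move=> k; have [j [-> [hl _]]] := hls k; split; first exact: exprn_gt0.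
  by split => //; apply: exprn_ile1; apply: ltW.
have hal : forall k i, Amap A mu 0 i <= alpha k i <= Amap A ell 0 i.
  move=> k i; rewrite halpha /alphaBB.
  have s0 : x k - prevx xm1 x k != 0.
    case: k => [|k] /=; first by rewrite subr_eq0 eq_sym.
    rewrite hx addrC addKr scaler_eq0 negb_or (gt_eqF (ht k).1) /=; exact/eqP/hd0.
  move: s0; move: (prevx xm1 x k) => xp s0.
  apply: bb_bounds => //.
  - exact: (le_trans hamin (minI_le _ i)).
  - exact: (le_trans (maxI_ge _ i) hamax).
  - rewrite dot_yBB.
    have c1 := conv_i A F mu xp (x k) i hcv.
    have c2 := conv_i A F mu (x k) xp i hcv.
    rewrite -(opprB (x k) xp) (dlinN A F (x k) (x k - xp)) enormN in c2.
    exact: (lin_lo c1 c2).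
  - rewrite dot_yBB.
    have c1 := smooth_i A F ell xp (x k) i hsm.
    have c2 := smooth_i A F ell (x k) xp i hsm.
    rewrite -(opprB (x k) xp) (dlinN A F (x k) (x k - xp)) enormN in c2.
    exact: (lin_hi c1 c2).
have alpos : forall k i, 0 < alpha k i.
  by move=> k i; apply: lt_le_trans (mupos i) _; have /andP[] := hal k i.
have SP : forall k, maxI (fun i => Amap A ('d F (x k) (d k)) 0 i / alpha k i) = - dotv (d k) (d k) /\
  (forall v tt, 0 <= tt -> exists i, tt * (Amap A ('d F (x k) (d k)) 0 i / alpha k i + dotv (d k) (d k))
     <= Amap A ('d F (x k) v) 0 i / alpha k i + dotv (d k) v).
  move=> k; apply: (subprob (fun i v => Amap A ('d F (x k) v) 0 i / alpha k i)).
  - by move=> i u v /=; rewrite (dlinD A F (x k) u v i) mulrDl.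
  - by move=> i a u /=; rewrite (dlinZ A F (x k) a u i) mulrA.
  - by move=> v; have := hopt k v; rewrite !subobjE.
have mono : forall k i, Amap A (F (x k.+1)) 0 i <= Amap A (F (x k)) 0 i.
  move=> k i; have [t0 [t1 hl]] := ht k.
  have P2 := ls_i A F _ _ _ _ hl i; rewrite -hx enorm2 in P2.
  have hm := maxI_ge (fun i => Amap A ('d F (x k) (d k)) 0 i / alpha k i) i.
  rewrite (SP k).1 /= in hm.
  rewrite -subr_le0; exact: (mono_arith t0 (alpos k i) (dotv_ge0 _) hm P2).
have step : forall k y, (forall i, Amap A (F y) 0 i <= Amap A (F (x k.+1)) 0 i) ->
  enorm (x k.+1 - y) ^+ 2 <= (1 - minI (fun i => t k * Amap A mu 0 i / alpha k i)) * enorm (x k - y) ^+ 2.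
  move=> k y hy; have [t0 [t1 hl]] := ht k.
  have [i hi] := (SP k).2 (y - x k) (t k) (ltW t0).
  have P1 := conv_i A F mu (x k) y i hcv; rewrite enorm2 in P1.
  have P2 := ls_i A F _ _ _ _ hl i; rewrite -hx enorm2 in P2.
  have S := step_arith _ _ _ _ _ _ _ _ _ _ _ t0 (alpos k i) P1 P2 hi (hy i).
  have e : x k.+1 - y = t k *: d k - (y - x k).
    by rewrite hx; apply/rowP => j; rewrite !mxE; lra.
  rewrite e (enormB (x k) y) !enorm2 dot_expand.
  exact: (fin2 S (minI_le _ i) (dotv_ge0 _)).
pose r := minI (fun i => Amap A mu 0 i / Amap A ell 0 i).
have r0 : 0 < r.
  by rewrite /r; have [i ->] := minI_ex (fun i => Amap A mu 0 i / Amap A ell 0 i); rewrite divr_gt0.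
have muell : forall i, Amap A mu 0 i <= Amap A ell 0 i.
  by move=> i; have /andP[h1 h2] := hal 0%N i; exact: le_trans h1 h2.
have r1 : r <= 1.
  by apply: le_trans (minI_le _ ord0) _; rewrite ler_pdivrMr // mul1r.
have tlb : forall k, minI (fun i => gamma * alpha k i / Amap A ell 0 i) <= t k.
  move=> k; pose c0 := minI (fun i => alpha k i / Amap A ell 0 i).
  have [i0 hi0] := minI_ex (fun i => alpha k i / Amap A ell 0 i).
  have c00 : 0 < c0 by rewrite /c0 hi0 divr_gt0.
  have c01 : c0 <= 1 by rewrite /c0 hi0 ler_pdivrMr // mul1r; have /andP[] := hal k i0.
  have [j [tj [_ hmax]]] := hls k.
  apply: le_trans (minI_le _ i0) _; rewrite -mulrA -hi0 -/c0 tj.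
  apply: (step_lb gamma c0 (gamma ^+ j) (ls_cond A F (x k) (d k) (alpha k))) => //.
  move=> c cpos cle i.
  have hs := smooth_i A F ell (x k) (x k + c *: d k) i hsm.
  have e : x k + c *: d k - x k = c *: d k by rewrite addrC addKr.
  rewrite e (dlinZ A F (x k) c (d k) i) enorm2 dotvZl dotvZr in hs.
  rewrite (AmapB A (F (x k + c *: d k))) enorm2.
  exact: (ls_arith cpos (ellpos i) (dotv_ge0 _) (le_trans cle (minI_le _ i)) hs).
have rlow : forall k, gamma * r * r <= minI (fun i => t k * Amap A mu 0 i / alpha k i).
  move=> k; apply: minI_ge => i.
  have h1 : gamma * r <= t k.
    apply: le_trans _ (tlb k); apply: minI_ge => j; rewrite -mulrA ler_pM2l //.
    rewrite /r; apply: le_trans (minI_le _ j) _; apply: ler_wpM2r; first by rewrite invr_ge0 ltW.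
    by have /andP[] := hal k j.
  have h2 : r <= Amap A mu 0 i / alpha k i.
    rewrite /r; apply: le_trans (minI_le _ i) _; apply: div_anti; first exact: ltW.
      exact: alpos.
    by have /andP[] := hal k i.
  rewrite -[X in _ <= X]mulrA; apply: ler_pM _ _ h1 h2; last exact: ltW.
  by rewrite mulr_ge0 // ltW.
have rup : forall k, 0 <= 1 - minI (fun i => t k * Amap A mu 0 i / alpha k i).
  move=> k; rewrite subr_ge0; apply: le_trans (minI_le _ ord0) _.
  have [t0 [t1 _]] := ht k; rewrite ler_pdivrMr ?alpos // mul1r.
  have /andP[h1 _] := hal k ord0.
  apply: le_trans h1; have := ler_wpM2r (ltW (mupos ord0)) t1; by rewrite mul1r.
pose rho := 1 - gamma * r * r.
have rho0 : 0 < rho.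
  rewrite /rho subr_gt0; have rr : r * r <= 1 by nra.
  have : gamma * (r * r) < 1 by nra.
  by rewrite mulrA.
have rho1 : rho < 1.
  rewrite /rho; have : 0 < gamma * r * r by rewrite !mulr_gt0.
  lra.
pose q := Num.sqrt rho.
have q0 : 0 < q by rewrite sqrtr_gt0.
have q1 : q < 1 by rewrite /q -sqrtr1 ltr_sqrt.
have hq : 0 < q < 1 by rewrite q0 q1.
have step' : forall k y, (forall i, Amap A (F y) 0 i <= Amap A (F (x k.+1)) 0 i) ->
  enorm (x k.+1 - y) <= q * enorm (x k - y).
  move=> k y hy; apply: sqrt_le; [exact: enorm_ge0 | exact: enorm_ge0 | exact: ltW rho0 |].
  apply: le_trans (step k y hy) _; apply: ler_wpM2r; first exact: sqr_ge0.
  by rewrite /rho lerD2l lerN2.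
have iter : forall N y, (forall i, Amap A (F y) 0 i <= Amap A (F (x N)) 0 i) ->
  enorm (x N - y) <= q ^+ N * enorm (x 0 - y).
  elim=> [|N IH] y hy; first by rewrite expr0 mul1r.
  apply: le_trans (step' N y hy) _; rewrite exprS -mulrA ler_pM2l //.
  by apply: IH => i; exact: le_trans (hy i) (mono N i).
have chain : forall k j, (k <= j)%N -> forall i, Amap A (F (x j)) 0 i <= Amap A (F (x k)) 0 i.
  move=> k j /subnK <-; elim: (j - k)%N => [|p IH] i; first by rewrite add0n.
  by rewrite addSn; exact: le_trans (mono _ i) (IH i).
pose B := enorm (x 0 - x 1) / (1 - q).
have B0 : 0 <= B by rewrite /B divr_ge0 ?enorm_ge0 // subr_ge0 ltW.
have hB : forall j, enorm (x 0 - x j) <= B.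
  case=> [|j].
    rewrite subrr /enorm /dotv big1 ?sqrtr0 // => i _.
    by rewrite mxE mul0r.
  have h1 : enorm (x 0 - x j.+1) <= enorm (x 0 - x 1) + enorm (x 1 - x j.+1).
    by have := enormD (x 0 - x 1) (x 1 - x j.+1); rewrite addrA subrK.
  have h2 : enorm (x 1 - x j.+1) <= q * enorm (x 0 - x j.+1).
    by apply: step' => i; apply: chain.
  rewrite /B ler_pdivlMr ?subr_gt0 //; lra.
have cauchyb : forall N j, (N <= j)%N -> enorm (x N - x j) <= q ^+ N * B.
  move=> N j hNj; apply: le_trans (iter N (x j) (chain N j hNj)) _.
  by apply: ler_wpM2l (hB j); rewrite exprn_ge0 // ltW.
have hcvg : cvg (x @ \oo).
  apply/cauchy_cvgP; apply: cauchy_exP => eps eps0.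
  have [N HN] := pow_small q B eps hq B0 eps0.
  exists (x N); exists N => // j /= hj.
  rewrite -ball_normE /=; apply: le_lt_trans (normr_le_enorm _) _.
  exact: le_lt_trans (cauchyb N j hj) (HN N (leqnn N)).
pose xs := lim (x @ \oo).
have hxs : x @ \oo --> xs := hcvg.
have hF : (F \o x) @ \oo --> F xs.
  apply: cvg_comp; first exact: hxs.
  exact: differentiable_continuous (hdiff xs).
have fxs : forall j i, Amap A (F xs) 0 i <= Amap A (F (x j)) 0 i.
  move=> j i.
  have hfi : (fun k => Amap A (F (x k)) 0 i) @ \oo --> Amap A (F xs) 0 i.
    apply/cvgrPdist_le => eps eps0.
    pose S := \sum_j0 `|A i j0|.
    have S0 : 0 <= S by rewrite /S sumr_ge0.
    have e0 : 0 < eps / (S + 1) by rewrite divr_gt0 // ltr_wpDl.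
    move: hF => /cvgrPdist_le /(_ _ e0) [N _ HN]; exists N => // k /HN /= hk.
    rewrite -(AmapB A (F xs) (F (x k))).
    apply: le_trans (Amap_lip A _ i) _.
    apply: le_trans (ler_wpM2l S0 hk) _.
    rewrite mulrCA ger_pMr // ler_pdivrMr ?ltr_wpDl // mul1r; lra.
  apply: (cvgr_to_le hfi); exists j => // k hk /=; exact: chain.
split => //; split => //; exists xs; split; last split => //.
- move=> [y [hy hne]]; apply: hne.
  have fy : forall N i, Amap A (F y) 0 i <= Amap A (F (x N)) 0 i.
    by move=> N i; exact: le_trans (leKP A _ _ hy i) (fxs N i).
  have hyc : x @ \oo --> y.
    apply/cvgrPdist_lt => eps eps0.
    have [N HN] := pow_small q (enorm (x 0 - y)) eps hq (enorm_ge0 _) eps0.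
    exists N => // k hk /=; rewrite distrC; apply: le_lt_trans (normr_le_enorm _) _.
    exact: le_lt_trans (iter k y (fy k)) (HN k hk).
  have -> : y = xs by apply: (cvg_unique _ hyc hxs).
  by [].
- move=> k; apply: sqrt_le; [exact: enorm_ge0 | exact: enorm_ge0 | exact: rup |].
  by apply: step => i; exact: fxs.
Qed.
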